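(* Let $\mathbf{w} = (\omega_k)_{k\geq 1}$ be a bounded sequence of strictly positive real numbers such that $$\sup_{n \geq 1} \inf_{k \geq 1} \prod_{j=1}^n \omega_{k+j} \leq 1.$$ Then there exists $\beta \geq 1$ such that for every $N \in \mathbb{N}$ the set $$\mathcal{A}^{\mathbf{w}}_{N,\beta} = \Big\{ k \in \mathbb{N} : \max_{k < u \leq k+N} \prod_{j=u}^{k+N} \omega_j \leq \beta \Big\}$$ is infinite. *)

(* Defs.v *)
From HB Require Import structures.
From mathcomp Require Import all_boot all_order all_algebra.
From mathcomp Require Import all_classical all_reals.
Set Implicit Arguments. Unset Strict Implicit. Unset Printing Implicit Defensive.
Import Order.TTheory GRing.Theory Num.Theory.
Local Open Scope ring_scope.
Local Open Scope classical_set_scope.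

(* The weight sequence w is indexed by k >= 1; the value w 0 is ignored. *)

Definition inf_block {R : realType} (w : nat -> R) (n : nat) : R :=
  inf [set (\prod_(1 <= j < n.+1) w (k + j)%N) | k in [set k : nat | (1 <= k)%N]].

(* max_{k < u <= k+N} prod_{j=u}^{k+N} w_j  (empty max := 0, only for N = 0) *)
Definition tail_max {R : realType} (w : nat -> R) (N k : nat) : R :=
  \big[Num.max/0]_(k.+1 <= u < (k + N).+1) \prod_(u <= j < (k + N).+1) w j.

Definition Aset {R : realType} (w : nat -> R) (N : nat) (beta : R) : set nat :=
  [set k : nat | (1 <= k)%N /\ tail_max w N k <= beta].

(* Main.v *)
Require Import Defs.
From HB Require Import structures.
From mathcomp Require Import all_boot all_order all_algebra.
From mathcomp Require Import all_classical all_reals.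
From mathcomp Require Import zify lra.
Import Order.TTheory GRing.Theory Num.Theory.
Local Open Scope ring_scope.
Local Open Scope classical_set_scope.

Lemma prod_upper (R : realType) (w : nat -> R) (M' : R) (N a b : nat) :
  (forall k : nat, (1 <= k)%N -> 0 < w k <= M') -> 1 <= M' ->
  (1 <= a)%N -> (b - a <= N)%N -> \prod_(a <= i < b) w i <= M' ^+ N.
Proof.
move=> hw hM ha hba.
apply: (le_trans (y := \prod_(a <= i < b) M')).
  rewrite big_nat_cond [leRHS]big_nat_cond; apply: ler_prod => i /andP[/andP[hi _] _].
  have /andP[h1 h2] := hw i (leq_trans ha hi).
  by rewrite (ltW h1) h2.
by rewrite prodr_const_nat; apply: ler_weXn2l.
Qed.

Lemma exist_lb (R : realType) (w : nat -> R) (T : nat) :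
  (forall k : nat, (1 <= k)%N -> 0 < w k) ->
  exists m0 : R, [/\ 0 < m0, m0 <= 1 & forall j, (1 <= j)%N -> (j <= T)%N -> m0 <= w j].
Proof.
move=> hw; elim: T => [|T [m0 [h1 h2 h3]]].
  by exists 1; split => // j h1 h2; lia.
exists (Num.min m0 (w T.+1)); split.
- by rewrite lt_min h1 hw.
- by rewrite ge_min h2.
- move=> j hj hjT; rewrite ge_min; case: (ltnP j T.+1) => h.
    by rewrite h3 //; lia.
  have -> : j = T.+1 by lia.
  by rewrite lexx orbT.
Qed.

Lemma prod_lower (R : realType) (w : nat -> R) (m0 : R) (T a b : nat) :
  0 < m0 -> m0 <= 1 -> (forall j, (1 <= j)%N -> (j <= T)%N -> m0 <= w j) ->
  (1 <= a)%N -> (b <= T.+1)%N -> m0 ^+ T <= \prod_(a <= i < b) w i.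
Proof.
move=> h0 h1 hw ha hb.
apply: (le_trans (y := \prod_(a <= i < b) m0)).
  rewrite prodr_const_nat; apply: ler_wiXn2l => //; [exact: ltW | lia].
rewrite big_nat_cond [leRHS]big_nat_cond; apply: ler_prod => i /andP[/andP[hi1 hi2] _].
by rewrite (ltW h0) hw //; lia.
Qed.

Lemma prod_ge0 (R : realType) (w : nat -> R) (a b : nat) :
  (forall k : nat, (1 <= k)%N -> 0 < w k) -> (1 <= a)%N -> 0 <= \prod_(a <= i < b) w i.
Proof.
move=> hw ha; rewrite big_nat_cond; apply: prodr_ge0 => i /andP[/andP[hi _] _].
by apply: ltW; apply: hw; apply: leq_trans hi.
Qed.

Theorem lemma2p4 (R : realType) (w : nat -> R)
  (wpos : forall k : nat, (1 <= k)%N -> 0 < w k)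
  (wbnd : exists M : R, forall k : nat, (1 <= k)%N -> w k <= M)
  (hsup : forall n : nat, (1 <= n)%N -> inf_block w n <= 1) :
  exists beta : R, 1 <= beta /\
    forall N : nat, infinite_set (Aset w N beta).
Proof.
move: wbnd => [M hM].
set M' := Num.max 1 M.
have hM1 : 1 <= M' by rewrite le_max lexx.
have hw : forall k, (1 <= k)%N -> 0 < w k <= M'.
  by move=> k hk; rewrite wpos // le_max hM ?orbT.
exists 2; split; first lra.
move=> N /finite_fsetP [X hX].
set T := (\max_(x <- finmap.enum_fset X) x).+1.
have hT : forall k, Aset w N 2 k -> (k < T)%N.
  move=> k hk; have : k \in finmap.enum_fset X by move: hk; rewrite hX.
  by move=> kX; rewrite ltnS; apply: (@leq_bigmax_seq _ _ xpredT (fun x => x) k kX).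
have H : forall e, (T + N <= e)%N -> exists t',
    [/\ (e - N <= t')%N, (t' < e)%N & 2 < \prod_(t'.+1 <= j < e.+1) w j].
  move=> e he.
  have kA : ~ Aset w N 2 (e - N)%N by move/hT; lia.
  apply: contrapT => hno; apply: kA; split; first lia.
  rewrite /tail_max (_ : (e - N + N)%N = e); last lia.
  rewrite big_nat_cond; apply: (big_ind (fun x => x <= 2)).
  - lra.
  - by move=> x y hx hy; rewrite ge_max hx hy.
  move=> u /andP[/andP[h1 h2] _]; rewrite leNgt; apply/negP => hlt; apply: hno.
  exists u.-1; rewrite prednK; last lia.
  split => //; lia.
have N1 : (0 < N)%N.
  case: N hT H {hX} => [|N] // hT H.
  by have [t' [? ? ?]] := H (T + 0)%N (leqnn _); lia.
have chain : forall e s, (T + N <= s)%N -> (s <= e)%N -> exists t j,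
    [/\ (s - N <= t)%N, (t <= s)%N, (e - t <= j.+1 * N)%N &
        2 ^+ j <= \prod_(t.+1 <= i < e.+1) w i].
  elim/ltn_ind => e IH s hs hse.
  have [t' [h1 h2 h3]] := H e (leq_trans hs hse).
  case: (ltnP t' s) => hts.
    exists t', 0%N; split; try lia.
    rewrite expr0; apply: le_trans (ltW h3); lra.
  have [t [j [g1 g2 g3 g4]]] := IH t' h2 s hs hts.
  exists t, j.+1; split; try lia.
  rewrite (@big_cat_nat _ _ _ t'.+1) /=; try lia.
  rewrite exprSr; apply: ler_pM => //.
  - by apply: exprn_ge0; lra.
  - by apply: ltW.
clear H hT hX.
set TT := (T + N)%N.
have [m0 [m0p m01 m0w]] := @exist_lb R w TT wpos.
have m0Tp : 0 < m0 ^+ TT by apply: exprn_gt0.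
have m0T1 : m0 ^+ TT <= 1 by apply: exprn_ile1 => //; exact: ltW.
have MN1 : 1 <= M' ^+ N by apply: exprn_ege1.
set K := 2 * M' ^+ N / m0 ^+ TT.
have K0 : 0 <= K by apply: divr_ge0; [apply: mulr_ge0; [lra | apply: exprn_ge0; lra] | exact: ltW].
set m := Num.Def.archi_bound K.
have hm : 2 * M' ^+ N < m%:R * m0 ^+ TT by rewrite -ltr_pdivrMr //; exact: archi_boundP.
set n := (TT + m.+1 * N)%N.
have n1 : (1 <= n)%N by lia.
have hinf : inf_block w n < 2 by apply: le_lt_trans (hsup n n1) _; lra.
have := inf_lt _ hinf.
case.
  exists (\prod_(1 <= j < n.+1) w (1 + j)%N); exists 1%N => //.
move=> y [k hk <-] {y} hD.
have hk1 : (1 <= k)%N by exact: hk.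
have reidx : \prod_(1 <= j < n.+1) w (k + j)%N = \prod_(k.+1 <= i < (k + n).+1) w i.
  rewrite -(add1n k) big_addn (_ : ((k + n).+1 - k = n.+1)%N); last lia.
  by apply: eq_bigr => i _; rewrite addnC.
rewrite reidx in hD.
have [t [j [g1 g2 g3 g4]]] := chain (k + n)%N (maxn k TT) (leq_maxr _ _) ltac:(lia).
clear chain hsup.
have jm : (m <= j)%N.
  have : (m.+1 * N <= j.+1 * N)%N by lia.
  by rewrite leq_pmul2r.
have mP : m%:R <= \prod_(t.+1 <= i < (k + n).+1) w i.
  apply: le_trans g4.
  apply: (le_trans (y := (2:R) ^+ m)).
    by rewrite -natrX ler_nat; apply: ltnW; apply: ltn_expl.
  by apply: ler_weXn2l => //; lra.
set P := \prod_(t.+1 <= i < (k + n).+1) w i in mP g4.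
have P0 : 0 <= P := le_trans (ler0n _ m) mP.
case: (ltnP t k) => htk.
  have split1 : P = \prod_(t.+1 <= i < k.+1) w i * \prod_(k.+1 <= i < (k + n).+1) w i.
    by rewrite /P (@big_cat_nat _ _ _ k.+1) //; clear -htk; lia.
  have hup : \prod_(t.+1 <= i < k.+1) w i <= M' ^+ N.
    apply: prod_upper => //.
    by clear -g1; lia.
  have hP : P <= M' ^+ N * 2.
    rewrite split1; apply: ler_pM.
    - exact: (@prod_ge0 _ _ _ _ wpos (ltn0Sn _)).
    - exact: (@prod_ge0 _ _ _ _ wpos (ltn0Sn _)).
    - exact: hup.
    - exact: ltW.
  have h1 : P < m%:R * m0 ^+ TT by apply: le_lt_trans hP _; rewrite mulrC.
  have h2 : m%:R * m0 ^+ TT <= P by apply: le_trans _ mP; rewrite ler_piMr.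
  by have := lt_le_trans h1 h2; rewrite ltxx.
have split2 : \prod_(k.+1 <= i < (k + n).+1) w i
    = \prod_(k.+1 <= i < t.+1) w i * P.
  rewrite /P (@big_cat_nat _ _ _ t.+1) //.
  by clear -g2; lia.
have hlow : m0 ^+ TT <= \prod_(k.+1 <= i < t.+1) w i.
  case: (eqVneq t k) => [->|hne]; first by rewrite big_geq.
  apply: prod_lower => //.
  by move: hne => /eqP hne; clear -g2 htk hne N1; lia.
rewrite split2 in hD.
have h3 : m0 ^+ TT * P <= \prod_(k.+1 <= i < t.+1) w i * P by apply: ler_wpM2r.
have h4 : (2:R) <= 2 * M' ^+ N by rewrite ler_peMr.
have h5 : m%:R * m0 ^+ TT <= P * m0 ^+ TT by apply: ler_wpM2r => //; exact: ltW.
have := le_lt_trans h3 hD.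
have := lt_le_trans (le_lt_trans h4 hm) h5.
rewrite mulrC => ha hb.
by have := lt_trans hb ha; rewrite ltxx.
Qed.
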